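(* Let $m,n$ be finite integers with $m\geq 2$ and $n\geq 2$. Then $\gamma_{gr}^{2}(P_m\Box P_n)=mn-1$.
   Context: $P_m$ is the path on $m$ vertices and $G\Box H$ is the Cartesian product: vertex set $V(G)\times V(H)$, with $(u,v)\sim(x,y)$ iff ($u=x$ and $vy\in E(H)$) or ($v=y$ and $ux\in E(G)$). For a vertex $v$, $N(v)$ is its open neighborhood and $N[v]=N(v)\cup\{v\}$. A sequence $S=(v_1,\ldots,v_r)$ of distinct vertices is a $2$-sequence if for each $i$ there is $u_i\in N[v_i]$ such that the number of indices $j<i$ with $u_i\in N[v_j]$ is less than $2$. $\gamma_{gr}^{2}(G)$ is the maximum length of a $2$-sequence of $G$. *)

(* Defs.v *)
From mathcomp Require Import all_boot all_order.
Set Implicit Arguments. Unset Strict Implicit. Unset Printing Implicit Defensive.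

(* A simple graph on a finite vertex type: adjacency relation [adj]
   (symmetric and irreflexive for the graphs we use). *)

Definition in_cnbhd (T : finType) (adj : rel T) (v u : T) : bool :=
  (u == v) || adj v u.

Definition is_kseq (T : finType) (adj : rel T) (k : nat) (s : seq T) : bool :=
  uniq s &&
  [forall i : 'I_(size s),
     [exists u : T,
        in_cnbhd adj (nth u s i) u &&
        (count (fun w => in_cnbhd adj w u) (take i s) < k)]].

(* gamma_gr^k(G): maximum length of a k-sequence (lengths are bounded by #|T|
   because the vertices are distinct). *)
Definition gamma_gr (T : finType) (adj : rel T) (k : nat) : nat :=
  \max_(r < #|T|.+1 | [exists t : r.-tuple T, is_kseq adj k t]) r.

Definition path_adj (m : nat) : rel 'I_m :=
  fun i j => (i.+1 == j :> nat) || (j.+1 == i :> nat).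

Definition cart_adj (T1 T2 : finType) (a1 : rel T1) (a2 : rel T2) : rel (T1 * T2) :=
  fun x y => ((x.1 == y.1) && a2 x.2 y.2) || ((x.2 == y.2) && a1 x.1 y.1).

Definition grid_adj (m n : nat) : rel ('I_m * 'I_n) :=
  cart_adj (@path_adj m) (@path_adj n).

(* Main.v *)
Require Import Defs.
From mathcomp Require Import all_boot all_order.
From mathcomp Require Import zify.

Section G.
Variables m n : nat.
Local Notation M := m.+2.
Local Notation N := n.+2.
Local Notation T := ('I_M * 'I_N)%type.

Lemma cnbE (w u : T) : in_cnbhd (@grid_adj M N) w u =
  ((w.1 == u.1 :> nat) && ((w.2 == u.2 :> nat) || (w.2.+1 == u.2 :> nat) || (u.2.+1 == w.2 :> nat)))
  || ((w.2 == u.2 :> nat) && ((w.1.+1 == u.1 :> nat) || (u.1.+1 == w.1 :> nat))).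
Proof.
case: w u => [a b] [x y]; rewrite /in_cnbhd /grid_adj /cart_adj /path_adj /=.
rewrite xpair_eqE -!val_eqE /=.
by apply/idP/idP => H; lia.
Qed.

Definition f (k : nat) : T := (inord (k %/ N), inord (k %% N)).

Lemma f1 k : k < M * N -> (f k).1 = k %/ N :> nat.
Proof. by move=> h; rewrite /= inordK // ltn_divLR. Qed.
Lemma f2 k : (f k).2 = k %% N :> nat.
Proof. by rewrite /= inordK // ltn_pmod. Qed.

Definition sq := map f (iota 0 (M * N - 1)).

Lemma count_le (p : pred T) (l s2 : seq T) : uniq l ->
  (forall x, x \in l -> p x -> x \in s2) -> count p l <= size s2.
Proof.
move=> ul h; rewrite -size_filter; apply: uniq_leq_size; first exact: filter_uniq.
by move=> x; rewrite mem_filter => /andP[px xl]; apply: h.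
Qed.

Lemma lexdiv k i : k < i -> k %/ N < i %/ N \/ (k %/ N = i %/ N /\ k %% N < i %% N).
Proof.
move=> ki; have := leq_div2r N (ltnW ki); rewrite leq_eqVlt => /orP[/eqP e|]; last by left.
right; split=> //; have := divn_eq k N; have := divn_eq i N; rewrite e; lia.
Qed.

Lemma uniq_sq : uniq sq.
Proof.
rewrite map_inj_in_uniq ?iota_uniq // => x y; rewrite !mem_iota /= !add0n => hx hy e.
have e1 : (f x).1 = (f y).1 :> nat by rewrite e.
have e2 : (f x).2 = (f y).2 :> nat by rewrite e.
rewrite f1 ?f1 in e1; try lia. rewrite !f2 in e2.
by rewrite (divn_eq x N) (divn_eq y N) e1 e2.
Qed.

Lemma lower : is_kseq (@grid_adj M N) 2 sq.
Proof.
apply/andP; split; first exact: uniq_sq.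
apply/forallP => -[i hi]; apply/existsP; rewrite /=.
have sz : size sq = M * N - 1 by rewrite size_map size_iota.
move: hi; rewrite sz => hi.
have tk : take i sq = map f (iota 0 i).
  by rewrite /sq -map_take take_iota; congr (map _ (iota _ _)); lia.
have memt : forall w, w \in take i sq -> exists2 k, k < i & w = f k.
  by move=> w; rewrite tk => /mapP[k]; rewrite mem_iota add0n => /andP[_ hk] ->; exists k.
have dm := divn_eq i N. have cN : i %% N < N by rewrite ltn_pmod.
have hM : M * N = N + m.+1 * N by rewrite mulSn.
have hiM : i < M * N by lia.
have rM : i %/ N < M by rewrite ltn_divLR.
have ul : uniq (take i sq) by apply: take_uniq; exact: uniq_sq.
case: (ltnP (i %/ N) m.+1) => hr.
- exists (inord (i %/ N).+1, inord (i %% N)).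
  rewrite (nth_map 0) ?size_iota // nth_iota // add0n.
  apply/andP; split.
    by rewrite cnbE f1 // f2 /= !inordK //; lia.
  apply: (leq_ltn_trans (@count_le _ _ [::] ul _)) => // w; case/memt => k hk ->.
  have hkM : k < M * N by lia.
  rewrite cnbE f1 // f2 /= !inordK //; [ | lia ..].
  have kd := divn_eq k N. have kN : k %% N < N by rewrite ltn_pmod.
  rewrite in_nil; case: (lexdiv k i hk); lia.
- have er : i %/ N = m.+1 by lia.
  have hc : i %% N < n.+1 by move: dm; rewrite er; lia.
  exists (inord (i %/ N), inord (i %% N).+1).
  rewrite (nth_map 0) ?size_iota // nth_iota // add0n.
  apply/andP; split.
    by rewrite cnbE f1 // f2 /= !inordK //; lia.
  apply: (leq_ltn_trans (@count_le _ _ [:: f (i - N + 1)] ul _)) => // w; case/memt => k hk ->.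
  have hkM : k < M * N by lia.
  rewrite cnbE f1 // f2 /= !inordK //; [ | lia ..].
  have kd := divn_eq k N. have kN : k %% N < N by rewrite ltn_pmod.
  move=> H.
  have [e1 e2] : k %/ N = m /\ k %% N = (i %% N).+1 by case: (lexdiv k i hk); lia.
  have ee : i - N + 1 = m * N + (i %% N).+1 by lia.
  have d1 : (m * N + (i %% N).+1) %/ N = m by rewrite divnMDl // divn_small // addn0.
  have d2 : (m * N + (i %% N).+1) %% N = (i %% N).+1 by rewrite modnMDl modn_small.
  by rewrite inE /f ee e1 e2 d1 d2.
Qed.

Lemma count2 (p : pred T) (l : seq T) x y : x != y -> x \in l -> y \in l ->
  p x -> p y -> 1 < count p l.
Proof.
move=> xy xl yl px py; rewrite -size_filter.
have := @uniq_leq_size _ [:: x; y] (filter p l); rewrite /= inE xy /=; apply=> //.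
by move=> z; rewrite !inE mem_filter => /orP[]/eqP->; apply/andP; split.
Qed.

Lemma upper (s : seq T) : is_kseq (@grid_adj M N) 2 s -> size s < M * N.
Proof.
move=> /andP[us /forallP H].
have cT : #|{: T}| = M * N by rewrite card_prod !card_ord.
rewrite ltn_neqAle; apply/andP; split; last by rewrite -(card_uniqP us) -cT max_card.
apply/eqP => hs.
have allin : forall x, x \in s.
  move=> x; apply/negPn/negP => nx.
  have := max_card (mem (x :: s)).
  by rewrite (card_uniqP _) /= ?nx // cT hs ltnn.
have hi : M * N - 1 < size s by rewrite hs; lia.
have [u /andP[vu cnt]] := existsP (H (Ordinal hi)).
move: vu cnt; rewrite /=; set v := nth u s (M * N - 1) => vu cnt.
have intake : forall x, x != v -> x \in take (M * N - 1) s.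
  move=> x nx; have := allin x.
  rewrite -{1}(cat_take_drop (M * N - 1) s) (drop_nth u hi) drop_oversize; last by rewrite hs; lia.
  by rewrite mem_cat inE (negbTE nx) orbF.
clearbody v; case: u vu cnt intake => a b vu cnt intake.
pose a' : 'I_M := inord (if a == 0 :> nat then 1 else a.-1).
pose b' : 'I_N := inord (if b == 0 :> nat then 1 else b.-1).
have va : (a' == a :> nat) = false /\ ((a'.+1 == a :> nat) || (a.+1 == a' :> nat)).
  rewrite /a' inordK; last by case: ifP => _; [|have := ltn_ord a]; lia.
  by case: ifP => h; lia.
have vb : (b' == b :> nat) = false /\ ((b'.+1 == b :> nat) || (b.+1 == b' :> nat)).
  rewrite /b' inordK; last by case: ifP => _; [|have := ltn_ord b]; lia.
  by case: ifP => h; lia.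
have p0 : in_cnbhd (@grid_adj M N) (a, b) (a, b) by rewrite cnbE /=; lia.
have p1 : in_cnbhd (@grid_adj M N) (a', b) (a, b) by rewrite cnbE /=; lia.
have p2 : in_cnbhd (@grid_adj M N) (a, b') (a, b) by rewrite cnbE /=; lia.
have n01 : (a, b) != (a', b).
  by apply/negP => /eqP e; have := congr1 (fun p : T => val p.1) e => /=; lia.
have n02 : (a, b) != (a, b').
  by apply/negP => /eqP e; have := congr1 (fun p : T => val p.2) e => /=; lia.
have n12 : (a', b) != (a, b').
  by apply/negP => /eqP e; have := congr1 (fun p : T => val p.1) e => /=; lia.
suff : 1 < count ((in_cnbhd (@grid_adj M N))^~ (a, b)) (take (M * N - 1) s).
  by rewrite ltnNge; move: cnt; rewrite ltnS => ->.
case: (v =P (a, b)) => [ev|nv].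
  by apply: (@count2 _ _ _ _ n12 _ _ p1 p2); apply: intake; rewrite ev eq_sym.
case: (v =P (a', b)) => [ev|nv1].
  by apply: (@count2 ((in_cnbhd (@grid_adj M N))^~ (a, b)) _ _ _ n02 _ _ p0 p2); apply: intake; rewrite ev // eq_sym.
by apply: (@count2 ((in_cnbhd (@grid_adj M N))^~ (a, b)) _ _ _ n01 _ _ p0 p1); apply: intake; apply/eqP => e; [apply: nv|apply: nv1].
Qed.

End G.

Theorem mainTheorem13 (m n : nat) (hm : 2 <= m) (hn : 2 <= n) :
  gamma_gr (@grid_adj m n) 2 = m * n - 1.
Proof.
case: m hm => [|[|m]] // _; case: n hn => [|[|n]] // _.
rewrite /gamma_gr; apply/eqP; rewrite eqn_leq; apply/andP; split.
  apply/bigmax_leqP => r /existsP [t kt]; have := @upper m n _ kt; rewrite size_tuple; lia.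
have hs : size (sq m n) == m.+2 * n.+2 - 1 by rewrite size_map size_iota.
have hr : m.+2 * n.+2 - 1 < #|{: 'I_m.+2 * 'I_n.+2}|.+1.
  by rewrite card_prod !card_ord; lia.
apply: (@leq_bigmax_cond _ _ _ (Ordinal hr)).
by apply/existsP; exists (Tuple hs); exact: (lower m n).
Qed.
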